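(* Let $H$ be an admissible Hamiltonian with Hessian $\mathcal H$, and let $q_0,\dots,q_{n-1}$ be the functions defined by $q_\ell(x)=\frac1{2n}\operatorname{tr}\big((A^T)^\ell(J(x)\mathcal H)^2\big)$ (so that $(J(x)\mathcal H)^2=\sum_{\ell=0}^{n-1}q_\ell(x)A^\ell$). Then $\nabla q_\ell(x)=A^\ell\nabla q_0(x)$, equivalently $\nabla q_\ell=A\nabla q_{\ell-1}$, for $\ell=1,\dots,n-1$.
   Context: Fix an integer $n\ge 2$. Points of $\mathbb R^{2n}$ are $x=(x_1,\dots,x_{2n})^{T}$; write $u=(x_1,\dots,x_n)^T$. Let $X(u)$ be the $n\times n$ matrix with entries $X(u)_{ij}=x_{k}$ where $k\in\{1,\dots,n\}$, $k\equiv i+j-1 \pmod n$, and let $J(x)=\begin{pmatrix}0&X(u)\\-X(u)&0\end{pmatrix}$. Let $\mathcal P$ be the $n\times n$ cyclic shift matrix ($\mathcal P_{i,i+1}=1$ for $1\le i\le n-1$, $\mathcal P_{n,1}=1$, all other entries $0$) and $A=\begin{pmatrix}\mathcal P&0\\0&\mathcal P\end{pmatrix}$. An admissible Hamiltonian is a homogeneous quadratic form $H(x)=\tfrac12 x^T\mathcal H x$ with a constant symmetric matrix $\mathcal H=\nabla^2H$ satisfying $A\mathcal H=\mathcal H A^T$. *)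

(* Defs.v *)
(* The real numbers are generalized to an arbitrary
   realFieldType R (the reals being an instance); derivatives are defined by
   the usual epsilon-delta limit of difference quotients. *)
From HB Require Import structures.
From mathcomp Require Import all_boot all_order all_algebra.
Set Implicit Arguments. Unset Strict Implicit. Unset Printing Implicit Defensive.
Import Order.TTheory GRing.Theory Num.Theory.
Local Open Scope ring_scope.

Section Defs.
Variable R : realFieldType.
Variable n : nat.

(* points of R^(2n) are column vectors indexed by 'I_(n+n);
   0-based index k < n corresponds to x_(k+1) *)

(* X(u)_{ij} = x_k with k = i+j-1 mod n (1-based); 0-based: k = (i+j) mod n *)
Definition Xmat (x : 'cV[R]_(n + n)) : 'M[R]_n :=
  \matrix_(i < n, j < n) x (lshift n (insubd i ((i + j) %% n)%N)) 0.

Definition Jmat (x : 'cV[R]_(n + n)) : 'M[R]_(n + n) :=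
  block_mx 0 (Xmat x) (- Xmat x) 0.

(* cyclic shift: P_{i,i+1} = 1, P_{n,1} = 1 (1-based); 0-based: P i j = [j == (i+1) mod n] *)
Definition Pshift : 'M[R]_n := \matrix_(i < n, j < n) ((j : nat) == (i.+1 %% n)%N)%:R.

Definition Amat : 'M[R]_(n + n) := block_mx Pshift 0 0 Pshift.

Definition admissible (Hm : 'M[R]_(n + n)) : Prop :=
  Hm^T = Hm /\ Amat *m Hm = Hm *m Amat^T.

Definition qfun (Hm : 'M[R]_(n + n)) (l : nat) (x : 'cV[R]_(n + n)) : R :=
  ((n + n)%:R)^-1 * \tr ((Amat^T) ^+ l *m ((Jmat x *m Hm) *m (Jmat x *m Hm))).

End Defs.

Definition has_derivative (R : realFieldType) (f : R -> R) (t0 d : R) : Prop :=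
  forall eps : R, 0 < eps -> exists2 delta : R, 0 < delta &
    forall h : R, h != 0 -> `|h| < delta ->
      `|(f (t0 + h) - f t0) / h - d| < eps.

Definition evec (R : realFieldType) (m : nat) (k : 'I_m) : 'cV[R]_m :=
  \col_(i < m) (i == k)%:R.

Definition is_gradient (R : realFieldType) (m : nat) (f : 'cV[R]_m -> R)
    (x g : 'cV[R]_m) : Prop :=
  forall k : 'I_m, has_derivative (fun t => f (x + t *: evec R k)) 0 (g k 0).

(* Main.v *)
Require Import Defs.
From HB Require Import structures.
From mathcomp Require Import all_boot all_order all_algebra zify ring.
Set Implicit Arguments. Unset Strict Implicit. Unset Printing Implicit Defensive.
Import Order.TTheory GRing.Theory Num.Theory.
Local Open Scope ring_scope.

Section Idx.
Variable R : realFieldType.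
Variable n : nat.

Definition sumI (i j : 'I_n) : 'I_n := insubd i ((i + j) %% n)%N.

Lemma npos (i : 'I_n) : (0 < n)%N.
Proof. by case: i => i /= /(leq_ltn_trans (leq0n i)). Qed.

Lemma sumIE (i j : 'I_n) : val (sumI i j) = ((i + j) %% n)%N.
Proof. rewrite /sumI insubdK //; exact: (ltn_pmod _ (npos i)). Qed.

Lemma predE (i : 'I_n) : val (ord_pred i) = ((i + n.-1) %% n)%N.
Proof. rewrite /=; have hn := npos i; have -> : (i + n).-1 = (i + n.-1)%N by lia. by []. Qed.

Lemma sumI_predl (i j : 'I_n) : ord_pred (sumI i j) = sumI (ord_pred i) j.
Proof.
apply: val_inj; rewrite predE !sumIE predE modnDml modnDml; congr (_ %% n)%N.
by rewrite addnAC.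
Qed.

Lemma sumI_predr (i j : 'I_n) : ord_pred (sumI i j) = sumI i (ord_pred j).
Proof.
apply: val_inj; rewrite predE !sumIE predE modnDml modnDmr; congr (_ %% n)%N.
by rewrite addnA.
Qed.

Definition Xc (u : 'cV[R]_n) : 'M[R]_n := \matrix_(i, j) u (sumI i j) 0.

Lemma PE i j : Pshift R n i j = (i == ord_pred j)%:R.
Proof.
rewrite mxE; suff -> : ((j:nat) == (i.+1 %% n)%N) = (i == ord_pred j) by [].
apply/eqP/eqP => [h|->]; last by change (val j = val (ordS (ord_pred j))); rewrite ord_predK.
by rewrite -(ordSK i); congr ord_pred; apply: val_inj; rewrite /= h.
Qed.

Lemma sum_ind (a : 'I_n) (F : 'I_n -> R) : \sum_k (k == a)%:R * F k = F a.
Proof.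
rewrite (bigD1 a) //= eqxx mul1r big1 ?addr0 // => k /negbTE ->; by rewrite mul0r.
Qed.

Lemma sum_ind_r (a : 'I_n) (F : 'I_n -> R) : \sum_k F k * (k == a)%:R = F a.
Proof. rewrite -[RHS](sum_ind a); apply: eq_bigr => k _; by rewrite mulrC. Qed.

Lemma PtM m (M : 'M[R]_(n, m)) i j : ((Pshift R n)^T *m M) i j = M (ord_pred i) j.
Proof.
rewrite mxE -(sum_ind (ord_pred i) (fun k => M k j)); apply: eq_bigr => k _.
by rewrite mxE PE.
Qed.

Lemma MP m (M : 'M[R]_(m, n)) i j : (M *m Pshift R n) i j = M i (ord_pred j).
Proof.
rewrite mxE -(sum_ind_r (ord_pred j) (fun k => M i k)); apply: eq_bigr => k _.
by rewrite PE.
Qed.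

Lemma PtP : (Pshift R n)^T *m Pshift R n = 1%:M.
Proof.
apply/matrixP => i j; rewrite PtM PE mxE; by rewrite (inj_eq (@ord_pred_inj n)).
Qed.

Lemma PPt : Pshift R n *m (Pshift R n)^T = 1%:M.
Proof. apply: mulmx1C; exact: PtP. Qed.

Lemma Xc_Pl u : (Pshift R n)^T *m Xc u = Xc ((Pshift R n)^T *m u).
Proof. apply/matrixP => i j; by rewrite PtM [LHS]mxE [RHS]mxE PtM sumI_predl. Qed.

Lemma Xc_Pr u : Xc u *m Pshift R n = Xc ((Pshift R n)^T *m u).
Proof. apply/matrixP => i j; by rewrite MP [LHS]mxE [RHS]mxE PtM sumI_predr. Qed.
End Idx.

Section Blk.
Variable R : realFieldType.
Variable n : nat.
Local Notation P := (Pshift R n).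
Local Notation A := (Amat R n).

Lemma Xmat_Xc (x : 'cV[R]_(n + n)) : Xmat x = Xc (usubmx x).
Proof. by apply/matrixP => i j; rewrite !mxE. Qed.

Lemma AtE : A^T = block_mx P^T 0 0 P^T.
Proof. by rewrite /Amat tr_block_mx !trmx0. Qed.

Lemma usub_At (y : 'cV[R]_(n + n)) : usubmx (A^T *m y) = P^T *m usubmx y.
Proof.
by rewrite -{1}(vsubmxK y) AtE mul_block_col col_mxKu !mul0mx addr0.
Qed.

Lemma AtJ y : A^T *m Jmat y = Jmat (A^T *m y).
Proof.
rewrite /Jmat !Xmat_Xc usub_At AtE mulmx_block -Xc_Pl.
by rewrite !mul0mx !mulmx0 !addr0 !add0r mulmxN.
Qed.

Lemma JA y : Jmat y *m A = Jmat (A^T *m y).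
Proof.
rewrite /Jmat !Xmat_Xc usub_At /Amat mulmx_block -Xc_Pr.
by rewrite !mul0mx !mulmx0 !addr0 !add0r mulNmx.
Qed.

Lemma AtA : A^T *m A = 1%:M.
Proof.
rewrite AtE /Amat mulmx_block PtP !mul0mx !mulmx0 !addr0 !add0r.
by rewrite -scalar_mx_block.
Qed.

Lemma AAt : A *m A^T = 1%:M.
Proof. apply: mulmx1C; exact: AtA. Qed.

Lemma Jlin a (y z : 'cV[R]_(n + n)) : Jmat (a *: y + z) = a *: Jmat y + Jmat z.
Proof.
have hX : Xmat (a *: y + z) = a *: Xmat y + Xmat z by apply/matrixP => i j; rewrite !mxE.
by rewrite /Jmat hX scale_block_mx add_block_mx !scaler0 !addr0 scalerN opprD.
Qed.

Lemma J0 : Jmat (0 : 'cV[R]_(n + n)) = 0.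
Proof.
have hX : Xmat (0 : 'cV[R]_(n + n)) = 0 by apply/matrixP => i j; rewrite !mxE.
by rewrite /Jmat hX oppr0 block_mx0.
Qed.
End Blk.

Lemma deriv_quad (R : realFieldType) (f : R -> R) b c :
  (forall h, f (0 + h) - f 0 = h * b + h ^+ 2 * c) -> has_derivative f 0 b.
Proof.
move=> hf eps he; exists (eps / (`|c| + 1)).
  by apply: divr_gt0 => //; apply: ltr_wpDl.
move=> h hn hlt; rewrite hf.
have -> : (h * b + h ^+ 2 * c) / h - b = h * c by field.
rewrite normrM.
have hc : 0 < `|c| + 1 by apply: ltr_wpDl.
apply: (le_lt_trans (y := `|h| * (`|c| + 1))).
  by rewrite ler_wpM2l // lerDl.
by rewrite -ltr_pdivlMr.
Qed.

Section Main.
Variable R : realFieldType.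
Variable n : nat.
Local Notation P := (Pshift R n).
Local Notation A := (Amat R n).
Local Notation B := ((Amat R n)^T).
Local Notation e := (@evec R (n + n)).

Lemma trace_quad (M K1 K2 : 'M[R]_(n + n)) h :
  \tr (M *m ((K1 + h *: K2) *m (K1 + h *: K2))) =
  \tr (M *m (K1 *m K1)) + h * (\tr (M *m (K2 *m K1)) + \tr (M *m (K1 *m K2)))
  + h ^+ 2 * \tr (M *m (K2 *m K2)).
Proof.
rewrite mulmxDl !mulmxDr -?scalemxAl -?scalemxAr -?scalemxAl -?scalemxAr ?scalerA.
rewrite !mxtraceD !mxtraceZ; ring.
Qed.

Definition Dl (Hm : 'M[R]_(n + n)) l (x : 'cV[R]_(n + n)) (k : 'I_(n + n)) : R :=
  ((n + n)%:R)^-1 * (\tr (B ^+ l *m ((Jmat (e k) *m Hm) *m (Jmat x *m Hm)))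
                    + \tr (B ^+ l *m ((Jmat x *m Hm) *m (Jmat (e k) *m Hm)))).

Lemma grad_l Hm l x : is_gradient (qfun Hm l) x (\col_k Dl Hm l x k).
Proof.
move=> k; rewrite mxE.
apply: (deriv_quad (c := ((n + n)%:R)^-1 *
   \tr (B ^+ l *m ((Jmat (e k) *m Hm) *m (Jmat (e k) *m Hm))))) => h.
rewrite /qfun /Dl add0r scale0r addr0 [x + _]addrC Jlin [_ *: Jmat _ + _]addrC mulmxDl -scalemxAl trace_quad.
ring.
Qed.

Lemma BJ l y : B ^+ l *m Jmat y = Jmat (B ^+ l *m y).
Proof.
elim: l => [|l IH]; first by rewrite !expr0 !mul1mx.
by rewrite exprS -mulmxE -!mulmxA IH AtJ.
Qed.

Lemma JAl l y : Jmat y *m A ^+ l = B ^+ l *m Jmat y.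
Proof.
elim: l => [|l IH]; first by rewrite !expr0 mulmx1 mul1mx.
by rewrite !exprSr -!mulmxE mulmxA IH -mulmxA JA -AtJ mulmxA.
Qed.

Lemma AHl (Hm : 'M[R]_(n + n)) l : A *m Hm = Hm *m B -> A ^+ l *m Hm = Hm *m B ^+ l.
Proof.
move=> hA; elim: l => [|l IH]; first by rewrite !expr0 mulmx1 mul1mx.
by rewrite !exprS -!mulmxE -mulmxA IH mulmxA hA -mulmxA.
Qed.

Lemma trexp l : (A ^+ l)^T = B ^+ l.
Proof.
elim: l => [|l IH]; first by rewrite !expr0 trmx1.
by rewrite exprSr exprS -!mulmxE trmx_mul IH.
Qed.

Definition D0 (Hm : 'M[R]_(n + n)) (x y : 'cV[R]_(n + n)) : R :=
  ((n + n)%:R)^-1 * (\tr ((Jmat y *m Hm) *m (Jmat x *m Hm))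
                    + \tr ((Jmat x *m Hm) *m (Jmat y *m Hm))).

Lemma D0lin Hm x y : D0 Hm x y = \sum_j y j 0 * D0 Hm x (e j).
Proof.
have hy : y = \sum_j y j 0 *: e j.
  apply/matrixP => i z; rewrite (ord1 z) summxE.
  rewrite -(sum_ind_r i (fun j => y j 0)); apply: eq_bigr => j _.
  by rewrite !mxE eq_sym.
rewrite {1}hy; apply: (big_rec2 (fun u v => D0 Hm x u = v)) => [|j u v _ <-].
  by rewrite /D0 J0 !mul0mx !mulmx0 mxtrace0 addr0 mulr0.
rewrite /D0 Jlin !mulmxDl -!scalemxAl !mulmxDr -?scalemxAr -?scalemxAl.
rewrite !mxtraceD !mxtraceZ; ring.
Qed.

Lemma Be l k j : (B ^+ l *m e k) j 0 = (A ^+ l) k j.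
Proof.
rewrite -trexp; transitivity ((A ^+ l)^T j k); last by rewrite mxE.
rewrite mxE -(sum_ind_r k (fun m => (A ^+ l)^T j m)).
by apply: eq_bigr => m _; congr (_ * _); rewrite mxE.
Qed.

Lemma BJH (Hm : 'M[R]_(n + n)) l x : A *m Hm = Hm *m B ->
  B ^+ l *m (Jmat x *m Hm) = Jmat x *m Hm *m B ^+ l.
Proof. by move=> hA; rewrite -[RHS]mulmxA -AHl // [RHS]mulmxA JAl mulmxA. Qed.

Lemma Dl_shift Hm l x k : A *m Hm = Hm *m B -> Dl Hm l x k = D0 Hm x (B ^+ l *m e k).
Proof.
move=> hA.
have e1 : B ^+ l *m (Jmat (e k) *m Hm *m (Jmat x *m Hm))
          = Jmat (B ^+ l *m e k) *m Hm *m (Jmat x *m Hm) by rewrite !mulmxA BJ.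
have e2 : B ^+ l *m (Jmat x *m Hm *m (Jmat (e k) *m Hm))
          = Jmat x *m Hm *m (Jmat (B ^+ l *m e k) *m Hm).
  by rewrite mulmxA BJH // -BJ !mulmxA.
by rewrite /Dl /D0 e1 e2.
Qed.
End Main.

Theorem mainTheorem16 (R : realFieldType) (n : nat) (Hm : 'M[R]_(n + n))
    (l : nat) :
  (2 <= n)%N -> admissible Hm -> (1 <= l <= n.-1)%N ->
  forall x : 'cV[R]_(n + n),
    exists g : 'cV[R]_(n + n),
      is_gradient (qfun Hm 0) x g /\
      is_gradient (qfun Hm l) x ((Amat R n) ^+ l *m g).
Proof.
move=> _ [_ hA] _ x; exists (\col_k D0 Hm x (@evec R (n + n) k)); split.
  have -> : \col_k D0 Hm x (@evec R (n + n) k) = \col_k Dl Hm 0 x k.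
    by apply/matrixP => i j; rewrite !mxE Dl_shift // expr0 mul1mx.
  exact: grad_l.
have -> : Amat R n ^+ l *m \col_k D0 Hm x (@evec R (n + n) k) = \col_k Dl Hm l x k.
  apply/matrixP => k z; rewrite (ord1 z) !mxE Dl_shift // D0lin.
  by apply: eq_bigr => j _; rewrite Be mxE.
exact: grad_l.
Qed.
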